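(* Let $Q$ be a connected quiver with two mutable vertices $1,2$ and at least one frozen vertex, such that $Q^{\mathrm{mut}}$ is mutation-infinite (equivalently $|b_{12}|\ge2$). Let $\mathbf M$ be either of the two infinite reduced mutation sequences $1212\cdots$ or $2121\cdots$. Then there is $T$ such that $Q^{(j)}_{\mathbf M}$ is sign-coherent for all $j>T$.
   Context: A quiver is a finite directed multigraph with no loops and no oriented 2-cycles, whose vertex set is partitioned into mutable and frozen vertices; arrows between two frozen vertices are ignored. $b_{ik}$ = number of arrows $i\to k$ minus number of arrows $k\to i$; $Q^{\mathrm{mut}}$ is the subquiver on the mutable vertices. Mutation $\mu_j$ at mutable $j$: for each path $i\to j\to k$ add $b_{ij}b_{jk}$ arrows $i\to k$, reverse all arrows at $j$, cancel 2-cycles. A mutation sequence $\mathbf M=m_1m_2\cdots$ has $Q^{(0)}_{\mathbf M}=Q$, $Q^{(i)}_{\mathbf M}=\mu_{m_i}(Q^{(i-1)}_{\mathbf M})$. Mutation-infinite means mutation-equivalent to infinitely many distinct quivers. Connected: the mutable part is connected as an undirected graph and every frozen vertex is adjacent to some mutable vertex. A mutable vertex adjacent to at least one frozen vertex is red (resp. green) if all arrows between it and frozen vertices point towards (resp. away from) it; a quiver is sign-coherent if every mutable vertex is red or green. *)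

(* Defs.v *)
(* A quiver is encoded by its exchange data b : V -> V -> int,
   b i k = #arrows i->k - #arrows k->i (skew_sym-symmetric), together with the
   predicate of mutable vertices. Entries between two frozen vertices are
   irrelevant (ignored by every notion below). *)
From mathcomp Require Import all_boot all_order all_algebra.
Set Implicit Arguments. Unset Strict Implicit. Unset Printing Implicit Defensive.
Import Order.TTheory GRing.Theory Num.Theory.
Local Open Scope ring_scope.

Definition skew_sym (V : finType) (b : V -> V -> int) : Prop :=
  forall i k, b i k = - b k i.

Definition posp (x : int) : int := Num.max x 0.

(* Quiver mutation at j, in terms of the b-matrix: for every path i -> j -> k
   add b_ij b_jk arrows i -> k, reverse arrows at j, cancel 2-cycles. *)
Definition mutate (V : finType) (b : V -> V -> int) (j : V) : V -> V -> int :=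
  fun i k =>
    if (i == j) || (k == j) then - b i k
    else b i k + posp (b i j) * posp (b j k) - posp (- b i j) * posp (- b j k).

(* Q^(0) = Q, Q^(i) = mu_{m i}(Q^(i-1)); the sequence m is indexed from 1. *)
Fixpoint mutseq (V : finType) (b : V -> V -> int) (m : nat -> V) (i : nat)
  : V -> V -> int :=
  match i with
  | 0%N => b
  | i'.+1 => mutate (mutseq b m i') (m i'.+1)
  end.

Definition adjacent (V : finType) (b : V -> V -> int) (i k : V) : bool :=
  b i k != 0.

Definition mutable_connected (V : finType) (mut : pred V) (b : V -> V -> int) : Prop :=
  forall P : pred V,
    (exists2 x, mut x & P x) -> (exists2 y, mut y & ~~ P y) ->
    exists x y, [/\ mut x, mut y, P x, ~~ P y & adjacent b x y].

Definition connected_quiver (V : finType) (mut : pred V) (b : V -> V -> int) : Prop :=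
  mutable_connected mut b /\
  forall f, ~~ mut f -> exists2 k, mut k & adjacent b f k.

(* red: all arrows between k and frozen vertices point towards k;
   green: all point away from k *)
Definition red (V : finType) (mut : pred V) (b : V -> V -> int) (k : V) : Prop :=
  forall f, ~~ mut f -> 0 <= b f k.
Definition green (V : finType) (mut : pred V) (b : V -> V -> int) (k : V) : Prop :=
  forall f, ~~ mut f -> b f k <= 0.

Definition sign_coherent (V : finType) (mut : pred V) (b : V -> V -> int) : Prop :=
  forall k, mut k -> (exists2 f, ~~ mut f & adjacent b f k) ->
    red mut b k \/ green mut b k.

(* the alternating sequence a b a b ... (m_1 = a) *)
Definition alt_seq (V : finType) (a c : V) : nat -> V :=
  fun i => if odd i then a else c.

(* Main.v *)
Require Import Defs.
From mathcomp Require Import all_boot all_order all_algebra zify.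
Import Order.TTheory GRing.Theory Num.Theory.
Local Open Scope ring_scope.
Set Implicit Arguments. Unset Strict Implicit.
Lemma posp_ge0 (x : int) : 0 <= x -> posp x = x.
Proof. by move=> h; rewrite /posp max_l. Qed.
Lemma posp_le0 (x : int) : x <= 0 -> posp x = 0.
Proof. by move=> h; rewrite /posp max_r. Qed.

Definition Fd (n : int) (x : int * int) : int * int := (x.2 + n * posp x.1, - x.1).
Definition Rg (x : int * int) : Prop := 0 < x.1 /\ x.2 < 0 /\ 0 <= x.1 + x.2.
Definition ev n x := exists t, Rg (iter t (Fd n) x).

Lemma Rg_step n x : 2 <= n -> Rg x -> Rg (Fd n x).
Proof.
case: x => P O; rewrite /Rg /Fd /= => hn [h1 [h2 h3]].
rewrite posp_ge0; last lia. nia.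
Qed.

Lemma ev_F n x : ev n (Fd n x) -> ev n x.
Proof. by case=> t h; exists t.+1; rewrite iterSr. Qed.

Lemma ev_R n x : Rg x -> ev n x.
Proof. by move=> h; exists 0%N. Qed.

Lemma evA n P O : 2 <= n -> 0 < P -> 0 <= O -> ev n (P, O).
Proof.
move=> hn h1 h2; apply: ev_F; apply: ev_R; rewrite /Rg /Fd /=.
rewrite posp_ge0; last lia. nia.
Qed.

Lemma evP0 n O : 2 <= n -> 0 < O -> ev n (0, O).
Proof.
move=> hn h; apply: ev_F; rewrite /Fd /= posp_ge0 // mulr0 addr0 oppr0.
exact: evA.
Qed.

Lemma evNeg n P O : 2 <= n -> P <= 0 -> (P != 0) || (O != 0) -> ev n (P, O).
Proof.
move=> hn hP hnz.
have [hP0|hPn] := eqVneq P 0.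
  subst P; move: hnz; rewrite eqxx /= => hO.
  have [hOp|hOn] : 0 < O \/ O < 0 by lia.
    exact: evP0.
  apply: ev_F; apply: ev_F.
  have -> : Fd n (Fd n (0, O)) = (0, -O).
    rewrite /Fd /= (@posp_ge0 0 (lexx 0)) mulr0 addr0 (@posp_le0 O (ltW hOn)).
    by rewrite !mulr0 !addr0 oppr0.
  apply: evP0 => //; lia.
have hPlt : P < 0 by lia.
apply: ev_F; rewrite /Fd /= posp_le0 // mulr0 addr0.
have [hOp|[hO0|hOn]] : 0 < O \/ O = 0 \/ O < 0 by lia.
- apply: evA => //; lia.
- subst O; apply: evP0 => //; lia.
- apply: ev_F.
  have -> : Fd n (O, - P) = (-P, -O).
    by rewrite /Fd /= (@posp_le0 O (ltW hOn)) mulr0 addr0.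
  apply: evA => //; lia.
Qed.

Lemma ev_all n P O : 2 <= n -> (P != 0) || (O != 0) -> ev n (P, O).
Proof.
move=> hn.
move: {2}(absz O) (leqnn (absz O)) => N; elim: N P O => [|N IH] P O hN hnz.
  have hO : O = 0 by lia.
  subst O; have [hP|hP] : P <= 0 \/ 0 < P by lia.
    exact: evNeg.
  exact: evA.
have [hP|hP] : P <= 0 \/ 0 < P by lia.
  exact: evNeg.
have [hO|hO] : 0 <= O \/ O < 0 by lia.
  exact: evA.
have [hs|hs] : 0 <= P + O \/ P + O < 0 by lia.
  by apply: ev_R; rewrite /Rg /=; lia.
apply: ev_F; rewrite /Fd /= posp_ge0; last lia.
have [h|h] : O + n * P <= 0 \/ 0 < O + n * P by lia.
  apply: evNeg => //; apply/orP; right; lia.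
apply: IH; lia.
Qed.

Lemma ev_forever n x : 2 <= n -> ev n x -> exists T, forall t, (T <= t)%N -> Rg (iter t (Fd n) x).
Proof.
move=> hn [T hT]; exists T => t ht.
rewrite -(subnK ht) iterD.
elim: (t - T)%N => [|k IH] //=.
exact: Rg_step.
Qed.

Definition pv (V : finType) (a c : V) (j : nat) := if odd j then c else a.
Definition ov (V : finType) (a c : V) (j : nat) := if odd j then a else c.

Lemma alt_S (V : finType) (a c : V) j : alt_seq a c j.+1 = pv a c j.
Proof. by rewrite /alt_seq /pv /=; case: (odd j). Qed.
Lemma pv_S (V : finType) (a c : V) j : pv a c j.+1 = ov a c j.
Proof. by rewrite /ov /pv /=; case: (odd j). Qed.
Lemma ov_S (V : finType) (a c : V) j : ov a c j.+1 = pv a c j.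
Proof. by rewrite /ov /pv /=; case: (odd j). Qed.

Lemma mut_block (V : finType) (b : V -> V -> int) (a c : V) :
  skew_sym b -> forall j,
  mutseq b (alt_seq a c) j (pv a c j) (ov a c j) = b a c /\
  mutseq b (alt_seq a c) j (ov a c j) (pv a c j) = - b a c.
Proof.
move=> sk; elim=> [|j [IH1 IH2]] /=.
  by rewrite /pv /ov /= sk opprK.
rewrite alt_S pv_S ov_S /mutate !eqxx !orbT IH1 IH2 opprK; split => //.
Qed.

Lemma mut_frozen (V : finType) (B : V -> V -> int) (p q i : V) (s n : int) :
  q != p -> i != p -> (s = 1 \/ s = -1) -> 0 <= n -> B p q = s * n ->
  s * mutate B p i q = s * B i q + n * posp (s * B i p) /\
  s * mutate B p i p = - (s * B i p).
Proof.
move=> hqp hip hs hn hb; rewrite /mutate (negbTE hqp) (negbTE hip) eqxx orbT /=.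
split; last by rewrite mulrN.
rewrite hb; case: hs => ->.
  rewrite !mul1r (posp_ge0 hn) (@posp_le0 (- n)); last by rewrite oppr_le0.
  by rewrite mulr0 subr0 mulrC.
rewrite !mulN1r opprK (@posp_le0 (- n)); last by rewrite oppr_le0.
rewrite (posp_ge0 hn) mulr0 addr0 opprB mulrC.
by rewrite addrC.
Qed.

Lemma frozen_state (V : finType) (b : V -> V -> int) (a c f : V) (s n : int) :
  skew_sym b -> a != c -> f != a -> f != c -> (s = 1 \/ s = -1) -> 0 <= n ->
  b a c = s * n -> forall j,
  (s * mutseq b (alt_seq a c) j f (pv a c j), s * mutseq b (alt_seq a c) j f (ov a c j))
  = iter j (Fd n) (s * b f a, s * b f c).
Proof.
move=> sk hac hfa hfc hs hn hb; elim=> [|j IH] //.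
rewrite iterS -IH /Fd /= alt_S pv_S ov_S.
have [h1 _] := mut_block a c sk j.
have hop : ov a c j != pv a c j by rewrite /ov /pv; case: (odd j); rewrite // eq_sym.
have hfp : f != pv a c j by rewrite /pv; case: (odd j).
have [-> ->] := mut_frozen hop hfp hs hn (etrans h1 hb).
by [].
Qed.

Lemma iter_Fd0 n t : iter t (Fd n) (0, 0) = (0, 0).
Proof.
elim: t => [|t IH] //; rewrite iterS IH /Fd /= (@posp_ge0 0 (lexx 0)).
by rewrite mulr0 addr0 oppr0.
Qed.

Unset Implicit Arguments.

Theorem mainTheorem19 (V : finType) (v1 v2 : V) (b : V -> V -> int)
  (a c : V) :
  v1 != v2 ->
  skew_sym b ->
  (exists f : V, (f != v1) && (f != v2)) ->
  connected_quiver (fun v => (v == v1) || (v == v2)) b ->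
  (2%:Z <= Num.norm (b v1 v2)) ->
  (a, c) = (v1, v2) \/ (a, c) = (v2, v1) ->
  exists T : nat, forall j : nat, (T < j)%N ->
    sign_coherent (fun v => (v == v1) || (v == v2)) (mutseq b (alt_seq a c) j).
Proof.
move=> n12 sk _ _ hnorm hac.
have hmut : forall v, ((v == v1) || (v == v2)) = ((v == a) || (v == c)).
  by move=> v; case: hac => [[-> ->]|[-> ->]] //; rewrite orbC.
have hac' : a != c by case: hac => [[-> ->]|[-> ->]] //; rewrite eq_sym.
set n := `|b a c|.
have hn : 2 <= n.
  rewrite /n; case: hac => [[-> ->]|[-> ->]] //; by rewrite sk normrN.
have [s [hs hb]] : exists s : int, (s = 1 \/ s = -1) /\ b a c = s * n.
  case: (lerP 0 (b a c)) => h.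
    by exists 1; split; [left|rewrite mul1r /n ger0_norm].
  by exists (-1); split; [right|rewrite mulN1r /n ltr0_norm // opprK].
have hn0 : 0 <= n by lia.
have H : forall l : seq V, exists T, forall f, f \in l -> ~~ ((f == a) || (f == c)) ->
   forall t, (T <= t)%N ->
   0 <= s * mutseq b (alt_seq a c) t f (pv a c t) /\
   s * mutseq b (alt_seq a c) t f (ov a c t) <= 0.
  elim=> [|f l [T IH]]; first by exists 0%N.
  have [T1 H1] : exists T1, ~~ ((f == a) || (f == c)) -> forall t, (T1 <= t)%N ->
   0 <= s * mutseq b (alt_seq a c) t f (pv a c t) /\
   s * mutseq b (alt_seq a c) t f (ov a c t) <= 0.
    case: (boolP ((f == a) || (f == c))) => hf; first by exists 0%N.
    rewrite negb_or in hf; case/andP: hf => hfa hfc.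
    have st := frozen_state sk hac' hfa hfc hs hn0 hb.
    case: (boolP ((s * b f a != 0) || (s * b f c != 0))) => hnz.
      have [T1 HT] := ev_forever hn (ev_all hn hnz).
      exists T1 => _ t ht; have := HT t ht; rewrite -st /Rg /=; lia.
    move: hnz; rewrite negb_or !negbK => /andP [/eqP e1 /eqP e2].
    exists 0%N => _ t _; have := st t; rewrite e1 e2 iter_Fd0 => -[-> ->]; lia.
  exists (maxn T T1) => g; rewrite inE => /orP [/eqP -> | hg] hgm t ht.
    by apply: H1 => //; apply: leq_trans ht; apply: leq_maxr.
  by apply: IH => //; apply: leq_trans ht; apply: leq_maxl.
have [T HT] := H (enum V).
exists T => j hj k hk _.
rewrite hmut in hk.
have hk' : k = pv a c j \/ k = ov a c j.
  by rewrite /pv /ov; case: (odd j); case/orP: hk => /eqP ->; auto.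
have G : forall f, ~~ ((f == v1) || (f == v2)) ->
   0 <= s * mutseq b (alt_seq a c) j f (pv a c j) /\
   s * mutseq b (alt_seq a c) j f (ov a c j) <= 0.
  by move=> f hf; apply: HT; rewrite ?mem_enum -?hmut //; apply: ltnW.
rewrite /red /green.
case: hs => hs1; rewrite hs1 in G; case: hk' => ->;
  [left|right|right|left] => f hf; have := G f hf; lia.
Qed.
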